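(* For integers $m\ge 1$ and $n\ge 0$, define $$\mathcal{C}_{m,n}= m!\left(\prod_{i=1}^{m}\frac{1}{n+i}\right)\binom{(m+1)n}{n,n,\dots,n}=\binom{m+n}{n}^{-1}\binom{(m+1)n}{n,n,\dots,n},$$ where the multinomial coefficient has $m+1$ lower entries all equal to $n$, i.e. equals $\frac{((m+1)n)!}{(n!)^{m+1}}$. Then $\mathcal{C}_{m,n}$ is an integer.
   Context: For $m=1$, $\mathcal{C}_{1,n}$ is the $n$-th Catalan number $\frac{1}{n+1}\binom{2n}{n}$. *)

(* Defs.v *)
From HB Require Import structures.
From mathcomp Require Import all_boot all_order all_algebra.
Set Implicit Arguments. Unset Strict Implicit. Unset Printing Implicit Defensive.
Import Order.TTheory GRing.Theory Num.Theory.
Local Open Scope ring_scope.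

Definition multinom_eq (m n : nat) : rat :=
  (((m.+1 * n)`!)%:R) / ((n`!)%:R ^+ m.+1).

Definition Cmn (m n : nat) : rat :=
  (m`!)%:R * (\prod_(1 <= i < m.+1) ((n + i)%:R)^-1) * multinom_eq m n.

(* Main.v *)
Require Import Defs.
From HB Require Import structures.
From mathcomp Require Import all_boot all_order all_algebra.
From mathcomp Require Import zify ring.
Import Order.TTheory GRing.Theory Num.Theory.

Lemma term_ineq m n q : 0 < q ->
  m * (n %/ q) + (m + n) %/ q <= m %/ q + ((m+1)*n) %/ q.
Proof.
move=> q0.
have aq : n %% q < q by rewrite ltn_mod.
have bq : m %% q < q by rewrite ltn_mod.
have En := divn_eq n q; have Em := divn_eq m q.
move: aq bq En Em; set A := n %/ q; set a := n %% q; set B := m %/ q; set b := m %% q.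
clearbody A a B b => aq bq -> ->.
have -> : B * q + b + (A * q + a) = (A + B) * q + (a + b) by lia.
rewrite divnMDl //.
have -> : (B * q + b + 1) * (A * q + a) = ((B*q+b+1)*A) * q + (B*q+b+1)*a by lia.
rewrite divnMDl //.
have H : (a + b) %/ q <= ((B * q + b + 1) * a) %/ q.
  case: (posnP a) => [->|apos].
    by rewrite add0n divn_small.
  apply: leq_div2r. nia.
lia.
Qed.

Lemma sum_ext p x K : prime p -> x <= K ->
  \sum_(1 <= k < x.+1) x %/ p ^ k = \sum_(1 <= k < K.+1) x %/ p ^ k.
Proof.
move=> pp xK.
rewrite [RHS](big_cat_nat _ (n:=x.+1)) //=.
rewrite [X in _ + X]big1_seq ?addn0 // => k; rewrite mem_index_iota => /and3P[_ k1 _].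
apply: divn_small.
apply: (leq_trans k1). apply: ltnW. apply: ltn_expl. exact: prime_gt1.
Qed.

Lemma key m n : n`! ^ m * (n + m)`! %| m`! * ((m+1)*n)`!.
Proof.
set D := _ * _; set N := _ * _.
have D0 : 0 < D by rewrite /D muln_gt0 expn_gt0 !fact_gt0.
have N0 : 0 < N by rewrite /N muln_gt0 !fact_gt0.
apply/gcdn_idPl.
apply: eqn_from_log => //; first by rewrite gcdn_gt0 D0.
move=> p; rewrite logn_gcd //.
apply/minn_idPl.
case pp: (prime p); last first.
  by rewrite /logn pp.
rewrite /D /N !lognM ?expn_gt0 ?fact_gt0 // lognX !logn_fact //.
set K := (m+1)*n + m.
rewrite (sum_ext p n K) //; last by lia.
rewrite (sum_ext p (n+m) K) //; last by lia.
rewrite (sum_ext p m K) //; last by lia.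
rewrite (sum_ext p ((m+1)*n) K) //; last by lia.
rewrite big_distrr -!big_split /=.
apply: leq_sum => k _. rewrite (addnC n m).
apply: term_ineq. by rewrite expn_gt0 prime_gt0.
Qed.

Lemma prodP m n : n`! * \prod_(1 <= i < m.+1) (n + i) = (n + m)`!.
Proof.
elim: m => [|m IH]; first by rewrite big_geq // muln1 addn0.
rewrite big_nat_recr //= mulnA IH addnS factS; lia.
Qed.
Local Open Scope ring_scope.

Theorem mainTheorem9 (m n : nat) (hm : (1 <= m)%N) : Cmn m n \is a Num.int.
Proof.
have [k Hk] := dvdnP (key m n).
set P := (\prod_(1 <= i < m.+1) (n + i))%N.
have HP := prodP m n.
have E : (m`!)%:R * (((m.+1 * n)`!)%:R : rat) =
   k%:R * ((n`!)%:R ^+ m * ((n`!)%:R * P%:R)).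
  rewrite -natrX -!natrM; congr (_%:R); rewrite HP -Hk; congr (_ * _`!)%N; lia.
have f0 : ((n`!)%:R : rat) != 0 by rewrite pnatr_eq0 -lt0n fact_gt0.
have P0 : (P%:R : rat) != 0.
  have : (0 < n`! * P)%N by rewrite /P HP fact_gt0.
  by rewrite muln_gt0 pnatr_eq0 -lt0n => /andP[].
suff -> : Cmn m n = k%:R by rewrite rpred_nat.
rewrite /Cmn /multinom_eq prodfV -natr_prod -/P.
move: E f0 P0; rewrite exprS.
move: (m`!%:R : rat) (((m.+1 * n)`!)%:R : rat) ((n`!)%:R : rat) (P%:R : rat) (k%:R : rat) => a b c d e E c0 d0.
have -> : a / d * (b / (c * c ^+ m)) = (a * b) / (c ^+ m * (c * d)).
  by field; rewrite d0 c0 expf_neq0.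
by rewrite E mulfK // mulf_neq0 ?expf_neq0 // mulf_neq0.
Qed.
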